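(* $\mathcal{C}_2(7,3,2)\le 396$.
   Context: $\mathcal{C}_q(n,k,r)$ is the minimum number of $k$-dimensional subspaces of $\mathbb{F}_q^n$ such that every $r$-dimensional subspace of $\mathbb{F}_q^n$ is contained in at least one of them. *)

(* Defs.v *)
From HB Require Import structures.
From mathcomp Require Import all_boot all_order all_algebra all_field.
Set Implicit Arguments. Unset Strict Implicit. Unset Printing Implicit Defensive.
Import GRing.Theory.
Local Open Scope ring_scope.

Definition is_covering (F : finFieldType) (n k r : nat)
    (S : seq {vspace 'rV[F]_n}) : Prop :=
  [/\ uniq S,
      (forall W, W \in S -> \dim W = k) &
      (forall U : {vspace 'rV[F]_n}, \dim U = r ->
         exists2 W, W \in S & (U <= W)%VS)].

Definition covering_number_le (F : finFieldType) (n k r m : nat) : Prop :=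
  exists2 S : seq {vspace 'rV[F]_n}, is_covering k r S & (size S <= m)%N.

(* Main.v *)
Require Import Defs.
From HB Require Import structures.
From mathcomp Require Import all_boot all_order all_algebra all_field.
From Stdlib Require Import PeanoNat NArith Lia.

Set Implicit Arguments. Unset Strict Implicit. Unset Printing Implicit Defensive.
Import GRing.Theory.

(* Construction: lifted Gabidulin MRD code (256 planes) + 7 x 20 planes built
   from a packing of PG(3,2). Vectors of F_2^7 are encoded as nats < 128. *)

Definition nz (n : N) : bool := has (fun j => N.testbit n (N.of_nat j)) (iota 0 7).

Definition combos (g : N * N * N) : seq N :=
  let: (x, y, z) := g in
  [:: x; y; N.lxor x y; z; N.lxor x z; N.lxor y z; N.lxor (N.lxor x y) z].

Definition blocks : seq (N * N * N) := (([::
  (1,2,4);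
  (9,34,28);
  (17,66,52);
  (25,98,44);
  (33,26,100);
  (41,58,124);
  (49,90,84);
  (57,122,76);
  (65,50,92);
  (73,18,68);
  (81,114,108);
  (89,82,116);
  (97,42,60);
  (105,10,36);
  (113,106,12);
  (121,74,20);
  (9,18,36);
  (1,50,60);
  (25,82,20);
  (17,114,12);
  (41,10,68);
  (33,42,92);
  (57,74,116);
  (49,106,108);
  (73,34,124);
  (65,2,100);
  (89,98,76);
  (81,66,84);
  (105,58,28);
  (97,26,4);
  (121,122,44);
  (113,90,52);
  (17,34,68);
  (25,2,92);
  (1,98,116);
  (9,66,108);
  (49,58,36);
  (57,26,60);
  (33,122,20);
  (41,90,12);
  (81,18,28);
  (89,50,4);
  (65,82,44);
  (73,114,52);
  (113,10,124);
  (121,42,100);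
  (97,74,76);
  (105,106,84);
  (25,50,100);
  (17,18,124);
  (9,114,84);
  (1,82,76);
  (57,42,4);
  (49,10,28);
  (41,106,52);
  (33,74,44);
  (89,2,60);
  (81,34,36);
  (73,66,12);
  (65,98,20);
  (121,26,92);
  (113,58,68);
  (105,90,108);
  (97,122,116);
  (33,66,28);
  (41,98,4);
  (49,2,44);
  (57,34,52);
  (1,90,124);
  (9,122,100);
  (17,26,76);
  (25,58,84);
  (97,114,68);
  (105,82,92);
  (113,50,116);
  (121,18,108);
  (65,106,36);
  (73,74,60);
  (81,42,20);
  (89,10,12);
  (41,82,60);
  (33,114,36);
  (57,18,12);
  (49,50,20);
  (9,74,92);
  (1,106,68);
  (25,10,108);
  (17,42,116);
  (105,98,100);
  (97,66,124);
  (121,34,84);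
  (113,2,76);
  (73,122,4);
  (65,90,28);
  (89,58,52);
  (81,26,44);
  (49,98,92);
  (57,66,68);
  (33,34,108);
  (41,2,116);
  (17,122,60);
  (25,90,36);
  (1,58,12);
  (9,26,20);
  (113,82,4);
  (121,114,28);
  (97,18,52);
  (105,50,44);
  (81,74,100);
  (89,106,124);
  (65,10,84);
  (73,42,76);
  (57,114,124);
  (49,82,100);
  (41,50,76);
  (33,18,84);
  (25,106,28);
  (17,74,4);
  (9,42,44);
  (1,10,52);
  (121,66,36);
  (113,98,60);
  (105,2,20);
  (97,34,12);
  (89,90,68);
  (81,122,92);
  (73,26,116);
  (65,58,108);
  (65,26,52);
  (73,58,44);
  (81,90,4);
  (89,122,28);
  (97,2,84);
  (105,34,76);
  (113,66,100);
  (121,98,124);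
  (1,42,108);
  (9,10,116);
  (17,106,92);
  (25,74,68);
  (33,50,12);
  (41,18,20);
  (49,114,60);
  (57,82,36);
  (73,10,20);
  (65,42,12);
  (89,74,36);
  (81,106,60);
  (105,18,116);
  (97,50,108);
  (121,82,68);
  (113,114,92);
  (9,58,76);
  (1,26,84);
  (25,122,124);
  (17,90,100);
  (41,34,44);
  (33,2,52);
  (57,98,28);
  (49,66,4);
  (81,58,116);
  (89,26,108);
  (65,122,68);
  (73,90,92);
  (113,34,20);
  (121,2,12);
  (97,98,36);
  (105,66,60);
  (17,10,44);
  (25,42,52);
  (1,74,28);
  (9,106,4);
  (49,18,76);
  (57,50,84);
  (33,82,124);
  (41,114,100);
  (89,42,84);
  (81,10,76);
  (73,106,100);
  (65,74,124);
  (121,50,52);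
  (113,18,44);
  (105,114,4);
  (97,82,28);
  (25,26,12);
  (17,58,20);
  (9,90,60);
  (1,122,36);
  (57,2,108);
  (49,34,116);
  (41,66,92);
  (33,98,68);
  (97,90,44);
  (105,122,52);
  (113,26,28);
  (121,58,4);
  (65,66,76);
  (73,98,84);
  (81,2,124);
  (89,34,100);
  (33,106,116);
  (41,74,108);
  (49,42,68);
  (57,10,92);
  (1,114,20);
  (9,82,12);
  (17,50,36);
  (25,18,60);
  (105,74,12);
  (97,106,20);
  (121,10,60);
  (113,42,36);
  (73,82,108);
  (65,114,116);
  (89,18,92);
  (81,50,68);
  (41,122,84);
  (33,90,76);
  (57,58,100);
  (49,26,124);
  (9,98,52);
  (1,66,44);
  (25,34,4);
  (17,2,28);
  (113,122,108);
  (121,90,116);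
  (97,58,92);
  (105,26,68);
  (81,98,12);
  (89,66,20);
  (65,34,60);
  (73,2,36);
  (49,74,52);
  (57,106,44);
  (33,10,4);
  (41,42,28);
  (17,82,84);
  (25,114,76);
  (1,18,100);
  (9,50,124);
  (121,106,76);
  (113,74,84);
  (105,42,124);
  (97,10,100);
  (89,114,44);
  (81,82,52);
  (73,50,28);
  (65,18,4);
  (57,90,20);
  (49,122,12);
  (41,26,36);
  (33,58,60);
  (25,66,116);
  (17,98,108);
  (9,2,68);
  (1,34,92);
  (8,16,1);
  (8,16,33);
  (8,16,65);
  (8,16,97);
  (32,64,1);
  (32,64,9);
  (32,64,17);
  (32,64,25);
  (40,80,1);
  (40,80,9);
  (40,80,17);
  (40,80,25);
  (48,88,1);
  (48,88,9);
  (48,88,17);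
  (48,88,25);
  (56,72,1);
  (56,72,9);
  (56,72,17);
  (56,72,25);
  (8,32,2);
  (8,32,18);
  (8,32,66);
  (8,32,82);
  (16,64,2);
  (16,64,10);
  (16,64,34);
  (16,64,42);
  (24,104,2);
  (24,104,10);
  (24,104,34);
  (24,104,42);
  (48,72,2);
  (48,72,10);
  (48,72,18);
  (48,72,26);
  (56,88,2);
  (56,88,10);
  (56,88,18);
  (56,88,26);
  (8,48,3);
  (8,48,19);
  (8,48,67);
  (8,48,83);
  (16,72,3);
  (16,72,11);
  (16,72,35);
  (16,72,43);
  (24,96,3);
  (24,96,11);
  (24,96,35);
  (24,96,43);
  (32,80,3);
  (32,80,11);
  (32,80,19);
  (32,80,27);
  (40,64,3);
  (40,64,11);
  (40,64,19);
  (40,64,27);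
  (8,64,4);
  (8,64,20);
  (8,64,36);
  (8,64,52);
  (16,96,4);
  (16,96,12);
  (16,96,36);
  (16,96,44);
  (24,40,4);
  (24,40,12);
  (24,40,68);
  (24,40,76);
  (32,88,4);
  (32,88,12);
  (32,88,20);
  (32,88,28);
  (56,80,4);
  (56,80,12);
  (56,80,20);
  (56,80,28);
  (8,80,5);
  (8,80,21);
  (8,80,37);
  (8,80,53);
  (16,104,5);
  (16,104,13);
  (16,104,37);
  (16,104,45);
  (24,32,5);
  (24,32,13);
  (24,32,69);
  (24,32,77);
  (40,72,5);
  (40,72,13);
  (40,72,21);
  (40,72,29);
  (48,64,5);
  (48,64,13);
  (48,64,21);
  (48,64,29);
  (8,96,6);
  (8,96,22);
  (8,96,38);
  (8,96,54);
  (16,32,6);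
  (16,32,14);
  (16,32,70);
  (16,32,78);
  (24,72,6);
  (24,72,14);
  (24,72,38);
  (24,72,46);
  (40,88,6);
  (40,88,14);
  (40,88,22);
  (40,88,30);
  (56,64,6);
  (56,64,14);
  (56,64,22);
  (56,64,30);
  (8,112,7);
  (8,112,23);
  (8,112,39);
  (8,112,55);
  (16,40,7);
  (16,40,15);
  (16,40,71);
  (16,40,79);
  (24,64,7);
  (24,64,15);
  (24,64,39);
  (24,64,47);
  (32,72,7);
  (32,72,15);
  (32,72,23);
  (32,72,31);
  (48,80,7);
  (48,80,15);
  (48,80,23);
  (48,80,31)])%num).

Definition all128 : seq N := map N.of_nat (iota 0 128).

Definition cov_check (bs : seq (seq N)) : bool :=
  all (fun a => nz a ==>
     let La := flatten [seq c <- bs | a \in c] in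
     all (fun b => (nz b && nz (N.lxor a b)) ==> (b \in La)) all128)
   all128.

Lemma cov_checkP bs : cov_check bs -> forall a b, a \in all128 -> b \in all128 ->
  nz a -> nz b -> nz (N.lxor a b) ->
  exists2 c, c \in bs & (a \in c) && (b \in c).
Proof.
move=> /allP H a b Ha Hb na nb nab.
have := H a Ha; move=> /implyP /(_ na) /allP /(_ b Hb).
move=> /implyP; rewrite nb nab => /(_ isT) /flattenP [c].
by rewrite mem_filter => /andP [c1 c2] c3; exists c => //; rewrite c1 c3.
Qed.

Definition check_free : bool := all (fun g => all nz (combos g)) blocks.

Lemma check_free_ok : check_free = true. Proof. vm_compute. reflexivity. Qed.
Lemma check_cov_ok : cov_check (map combos blocks) = true. Proof. vm_compute. reflexivity. Qed.

Local Open Scope ring_scope.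

Definition dec (n : N) : 'rV['F_2]_7 :=
  \row_(j < 7) (if N.testbit n (N.of_nat j) then 1 else 0).

Lemma F2_11 : (1 + 1 = 0 :> 'F_2). Proof. by apply/val_inj. Qed.

Lemma F2_cases (a : 'F_2) : a = 0 \/ a = 1.
Proof. case: a => [[|[|m]]] Hm; [left|right|]; try by apply/val_inj. by []. Qed.

Lemma dec_xor a b : dec (N.lxor a b) = dec a + dec b.
Proof.
apply/rowP => j; rewrite !mxE N.lxor_spec.
by case: (N.testbit a _); case: (N.testbit b _); rewrite /= ?addr0 ?add0r ?F2_11.
Qed.

Lemma dec_nz n : nz n -> dec n != 0.
Proof.
case/hasP => j; rewrite mem_iota /= => Hj Hb.
apply/negP => /eqP /rowP /(_ (Ordinal Hj)); rewrite !mxE /= Hb.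
by move/eqP.
Qed.

Lemma dec_eq a b : ~~ nz (N.lxor a b) -> dec a = dec b.
Proof.
move=> H; apply/rowP => j; rewrite !mxE.
have : N.testbit (N.lxor a b) (N.of_nat j) = false.
  apply/negbTE; apply: contra H => Hb; apply/hasP; exists (nat_of_ord j) => //.
  by rewrite mem_iota /= ltn_ord.
by rewrite N.lxor_spec; case: (N.testbit a _); case: (N.testbit b _).
Qed.

Lemma testbitN_big (i : nat) (n : N) : (i < 128)%nat -> (7 <= n)%num ->
  N.testbit (N.of_nat i) n = false.
Proof.
move=> /ltP Hi Hn.
case: i Hi => [|i] Hi; first exact: N.bits_0.
apply: N.bits_above_log2.
apply/N.log2_lt_pow2; first lia.
apply: (@N.lt_le_trans _ (2 ^ 7)); first lia.
apply: N.pow_le_mono_r => //; lia.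
Qed.

Lemma dec_inj : injective (fun i : 'I_128 => dec (N.of_nat i)).
Proof.
move=> i j /rowP H; apply/val_inj/Nat2N.inj/N.bits_inj => n.
case: (N.lt_ge_cases n 7) => Hn.
  have Hm : (N.to_nat n < 7)%nat by apply/ltP; lia.
  have := H (Ordinal Hm); rewrite !mxE /= N2Nat.id.
  by case: (N.testbit _ n); case: (N.testbit _ n) => // /eqP.
by rewrite (testbitN_big (ltn_ord i) Hn) (testbitN_big (ltn_ord j) Hn).
Qed.

Lemma dec_surj (u : 'rV['F_2]_7) : exists2 n, n \in all128 & dec n = u.
Proof.
have := @inj_card_onto _ _ _ dec_inj.
rewrite card_mx card_Fp // card_ord => /(_ (leqnn _) u) /codomP [i ->].
by exists (N.of_nat i) => //; rewrite map_f // mem_iota ltn_ord.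
Qed.

Lemma dec0 : dec 0 = 0.
Proof. by apply/rowP => j; rewrite !mxE N.bits_0. Qed.

Definition Wof (g : N * N * N) : {vspace 'rV['F_2]_7} :=
  let: (x, y, z) := g in <<[:: dec x; dec y; dec z]>>%VS.

Lemma combos_in g c : c \in combos g -> dec c \in Wof g.
Proof.
case: g => [[x y] z] /=.
have hx : dec x \in <<[:: dec x; dec y; dec z]>>%VS by apply: memv_span; rewrite !inE eqxx.
have hy : dec y \in <<[:: dec x; dec y; dec z]>>%VS by apply: memv_span; rewrite !inE eqxx ?orbT.
have hz : dec z \in <<[:: dec x; dec y; dec z]>>%VS by apply: memv_span; rewrite !inE eqxx ?orbT.
rewrite !inE => H.
repeat (case/orP: H => [/eqP->|H]; first by rewrite ?dec_xor ?memvD).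
by move/eqP: H => ->; rewrite !dec_xor !memvD.
Qed.

Lemma Wof_dim g : all nz (combos g) -> \dim (Wof g) = 3%nat.
Proof.
case: g => [[x y] z] /= /and4P [nx ny nxy /and4P [nzz nxz nyz /andP [nxyz _]]].
have F : forall a b c : 'F_2, a *: dec x + b *: dec y + c *: dec z = 0 ->
    [/\ a = 0, b = 0 & c = 0].
  move=> a b c.
  case: (F2_cases a) => ->; case: (F2_cases b) => ->; case: (F2_cases c) => ->;
  rewrite ?scale0r ?scale1r ?addr0 ?add0r //; rewrite -?dec_xor => /eqP;
  by rewrite ?(negbTE (dec_nz _)).
have : free [tuple dec x; dec y; dec z].
  apply/freeP => k; rewrite !big_ord_recl big_ord0 addr0 /= addrA => /F [h0 h1 h2] i.
  case: i => [[|[|[|m]]] Hi] //.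
  - by rewrite -h0; congr k; apply/val_inj.
  - by rewrite -h1; congr k; apply/val_inj.
  - by rewrite -h2; congr k; apply/val_inj.
by move/eqP.
Qed.

Arguments blocks : simpl never.

Lemma cover_lemma (U : {vspace 'rV['F_2]_7}) : \dim U = 2%nat ->
  exists2 g, g \in blocks & (U <= Wof g)%VS.
Proof.
move=> dU.
have /andP [/eqP spX fX] := vbasisP U.
have sz : size (vbasis U) = 2%nat by rewrite size_tuple dU.
move: spX fX sz; case: (vbasis U : seq _) => [|u [|v [|w s]]] // spX fX _.
have [n1 H1 E1] := dec_surj u.
have [n2 H2 E2] := dec_surj v.
have u0 : u != 0 by apply: (free_not0 fX); rewrite inE eqxx.
have v0 : v != 0 by apply: (free_not0 fX); rewrite !inE eqxx orbT.
have uv : u != v by have := free_uniq fX; rewrite /= inE andbT.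
have nz1 : nz n1.
  by apply: contraNT u0 => H; rewrite -E1 (dec_eq (b:=0)) ?dec0 ?N.lxor_0_r.
have nz2 : nz n2.
  by apply: contraNT v0 => H; rewrite -E2 (dec_eq (b:=0)) ?dec0 ?N.lxor_0_r.
have nz12 : nz (N.lxor n1 n2).
  by apply: contraNT uv => H; rewrite -E1 -E2 (dec_eq H).
have [c /mapP [g Hg ->] /andP [c1 c2]] :=
  cov_checkP check_cov_ok H1 H2 nz1 nz2 nz12.
exists g => //.
rewrite -spX; apply/span_subvP => w; rewrite !inE => /orP [/eqP->|/eqP->].
  by rewrite -E1 combos_in.
by rewrite -E2 combos_in.
Qed.

Theorem mainTheorem9 : covering_number_le 'F_2 7 3 2 396.
Proof.
exists (undup (map Wof blocks)); last first.
  by apply: leq_trans (size_undup _) _; rewrite size_map.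
split; first exact: undup_uniq.
  move=> W; rewrite mem_undup => /mapP [g Hg ->].
  by apply: Wof_dim; move/allP: check_free_ok; apply.
move=> U /cover_lemma [g Hg sub].
by exists (Wof g) => //; rewrite mem_undup map_f.
Qed.
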